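(* In the setting below, for every face $F$ of $\mathcal{P}_\lambda$, $\phi(F)$ is a face of the ladder diagram $\Gamma_{\mathbf{k}}$, i.e. $\phi(F)\in\mathcal{F}(\Gamma_{\mathbf{k}})$.
   Context: Let $\mathbf{k}=(k_1,\dots,k_s)$ be positive integers with sum $n$, $n_0=0$, $n_i=\sum_{j\le i}k_j$, and $\lambda=(\lambda_1,\dots,\lambda_n)$ real with $\lambda_1=\cdots=\lambda_{n_1}>\lambda_{n_1+1}=\cdots=\lambda_{n_2}>\cdots>\lambda_{n_{s-1}+1}=\cdots=\lambda_n$. Let $I=\{(i,j)\in\mathbb{Z}^2:i,j\ge1,i+j\le n\}$; $\mathcal{P}_\lambda=\{x=(x_{i,j})_{(i,j)\in I}: x_{i,j+1}\ge x_{i,j}\ge x_{i+1,j}\ \forall (i,j)\in I\}$ with $x_{i,n+1-i}:=\lambda_i$. $Q^+$ is the directed graph on $\mathbb{Z}_{\ge0}^2$ with edges $((i,j),(i,j+1))$, $((i,j),(i+1,j))$. Terminal vertices $T_{\mathbf{k}}=\{(n_\ell,n-n_\ell):0\le\ell\le s\}$; $\Gamma_{\mathbf{k}}$ is the induced subgraph of $Q^+$ on $\{(a,b):a\le c,b\le d\text{ for some }(c,d)\in T_{\mathbf{k}}\}$. A positive path is a shortest directed path in $\Gamma_{\mathbf{k}}$ from $(0,0)$ to a terminal vertex. A face of $\Gamma_{\mathbf{k}}$ is a subgraph containing all terminal vertices that is a union of positive paths; $\mathcal{F}(\Gamma_{\mathbf{k}})$ is the set of faces. For a face $F$ of $\mathcal{P}_\lambda$,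 $\phi(F)$ is the subgraph of $Q^+$ whose edges are: all $((0,i),(0,i+1))$ and $((i,0),(i+1,0))$, $0\le i\le n-1$; $((i-1,j),(i,j))$ for $(i,j)\in I$ whenever some $x\in F$ has $x_{i,j}<x_{i,j+1}$; $((i,j-1),(i,j))$ for $(i,j)\in I$ whenever some $x\in F$ has $x_{i,j}>x_{i+1,j}$; its vertices are the endpoints of these edges. *)

(* Defs.v *)
From HB Require Import structures.
From mathcomp Require Import all_boot all_order all_algebra.
Set Implicit Arguments. Unset Strict Implicit. Unset Printing Implicit Defensive.
Import Order.TTheory GRing.Theory Num.Theory.

Notation vert := (nat * nat)%type.
Notation edge := (vert * vert)%type.

Definition nsum (k : seq nat) (l : nat) : nat := sumn (take l k).

Definition inI (n i j : nat) : bool := [&& 1 <= i, 1 <= j & i + j <= n].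

Section GZ.
Variable R : realFieldType.
Local Open Scope ring_scope.

(* points are functions nat -> nat -> R; only coordinates in I are meaningful,
   the others are required to vanish in P_lambda *)
Definition point := nat -> nat -> R.

(* x_{i,j}, with the convention x_{i,n+1-i} := lambda_i *)
Definition ext (n : nat) (lam : nat -> R) (x : point) (i j : nat) : R :=
  if (i + j == n.+1)%N then lam i else x i j.

Definition inGZ (n : nat) (lam : nat -> R) (x : point) : Prop :=
  (forall i j, ~~ inI n i j -> x i j = 0) /\
  (forall i j, inI n i j ->
     x i j <= ext n lam x i j.+1 /\ ext n lam x i.+1 j <= x i j).

Definition dot (n : nat) (c x : point) : R :=
  \sum_(i < n.+1) \sum_(j < n.+1) c i j * x i j.

Definition isPolytopeFace (n : nat) (P F : point -> Prop) : Prop :=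
  (exists x, F x) /\
  exists c : point, forall x,
    F x <-> (P x /\ forall y, P y -> dot n c y <= dot n c x).

Record subgraph := Subgraph { sg_V : vert -> Prop; sg_E : edge -> Prop }.

Definition phi (n : nat) (lam : nat -> R) (F : point -> Prop) : subgraph :=
  let E := fun e : edge =>
    (exists i, (i <= n.-1)%N /\ e = ((0, i), (0, i.+1))%N) \/
    (exists i, (i <= n.-1)%N /\ e = ((i, 0), (i.+1, 0))%N) \/
    (exists i j, inI n i j /\ e = ((i.-1, j), (i, j)) /\
       exists x, F x /\ x i j < ext n lam x i j.+1) \/
    (exists i j, inI n i j /\ e = ((i, j.-1), (i, j)) /\
       exists x, F x /\ x i j > ext n lam x i.+1 j) in
  Subgraph (fun v => exists e, E e /\ (v = e.1 \/ v = e.2)) E.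

End GZ.

Definition Qedge (u v : vert) : bool :=
  (v == (u.1, u.2.+1)) || (v == (u.1.+1, u.2)).

Definition isTerminal (k : seq nat) (v : vert) : bool :=
  has (fun l => v == (nsum k l, sumn k - nsum k l)) (iota 0 (size k).+1).

Definition inGamma (k : seq nat) (v : vert) : bool :=
  has (fun l => (v.1 <= nsum k l) && (v.2 <= sumn k - nsum k l))
      (iota 0 (size k).+1).

Definition gammaEdge (k : seq nat) (u v : vert) : bool :=
  [&& Qedge u v, inGamma k u & inGamma k v].

(* a directed path in Gamma_k starting at (0,0) is encoded by the list p of
   its vertices after (0,0); it has size p edges *)
Definition positivePath (k : seq nat) (p : seq vert) : Prop :=
  path (gammaEdge k) (0, 0) p /\ isTerminal k (last (0, 0) p) /\
  (forall q, path (gammaEdge k) (0, 0) q -> last (0, 0) q = last (0, 0) p ->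
     size p <= size q).

Definition pathVerts (p : seq vert) : seq vert := (0, 0) :: p.
Definition pathEdges (p : seq vert) : seq edge := zip ((0, 0) :: p) p.

Definition isGammaFace (k : seq nat) (G : subgraph) : Prop :=
  (forall v, isTerminal k v -> sg_V G v) /\
  exists Paths : seq vert -> Prop,
    (forall p, Paths p -> positivePath k p) /\
    (forall v, sg_V G v <-> exists p, Paths p /\ v \in pathVerts p) /\
    (forall e, sg_E G e <-> exists p, Paths p /\ e \in pathEdges p).

(* Main.v *)
Require Import Defs.
From HB Require Import structures.
From mathcomp Require Import all_boot all_order all_algebra.
From mathcomp Require Import zify.
Import Order.TTheory GRing.Theory Num.Theory.
Local Open Scope ring_scope.
Set Implicit Arguments. Unset Strict Implicit.

Fixpoint chain (E : edge -> Prop) (u : vert) (q : seq vert) : Prop :=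
  match q with [::] => True | v :: q' => (E (u, v) /\ Qedge u v) /\ chain E v q' end.

Lemma chain_cat E u q1 q2 :
  chain E u (q1 ++ q2) <-> chain E u q1 /\ chain E (last u q1) q2.
Proof.
elim: q1 u => [|v q1 IH] u /=; first by tauto.
split.
- by move=> [H /IH [H1 H2]].
- by move=> [[H H1] H2]; split => //; apply/IH.
Qed.

Lemma Qedge_sum u v : Qedge u v -> (v.1 + v.2 = (u.1 + u.2).+1)%N.
Proof. by case/orP=> /eqP -> /=; lia. Qed.

Lemma Qedge_le u v : Qedge u v -> (u.1 <= v.1)%N /\ (u.2 <= v.2)%N.
Proof. by case/orP=> /eqP -> /=; lia. Qed.

Lemma chain_le E u q : chain E u q -> forall v, v \in u :: q ->
  (v.1 <= (last u q).1)%N /\ (v.2 <= (last u q).2)%N.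
Proof.
elim: q u => [|w q IH] u /=.
  by move=> _ v; rewrite mem_seq1 => /eqP ->.
move=> [[_ HQ] Hc] v; rewrite in_cons => /orP [/eqP ->|Hv]; last exact: IH.
have [h1 h2] := Qedge_le HQ.
have [h3 h4] := IH w Hc w (mem_head _ _).
split; [exact: leq_trans h1 h3 | exact: leq_trans h2 h4].
Qed.

Lemma chain_edges E u q : chain E u q -> forall e, e \in zip (u::q) q -> E e.
Proof.
elim: q u => [|w q IH] u //= [[Eu _] Hc] e.
rewrite in_cons => /orP [/eqP -> // | He].
exact: IH Hc e He.
Qed.

Lemma chain_path k E u q : chain E u q -> (forall v, v \in u::q -> inGamma k v) ->
  path (gammaEdge k) u q.
Proof.
elim: q u => [|w q IH] u //= [[_ Hq] Hc] HG.
apply/andP; split.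
  by rewrite /gammaEdge Hq !HG // ?mem_head // in_cons mem_head orbT.
apply: IH => // v Hv; apply: HG; by rewrite in_cons Hv orbT.
Qed.

Lemma path_size k u q : path (gammaEdge k) u q ->
  ((last u q).1 + (last u q).2 = u.1 + u.2 + size q)%N.
Proof.
elim: q u => [|w q IH] u /=; first by rewrite addn0.
move/andP=> [/and3P [Hq _ _] Hp].
rewrite (IH _ Hp) (Qedge_sum Hq); lia.
Qed.

Lemma mem_edge_cat (a : vert) q1 w q2 :
  (last a q1, w) \in zip (a :: q1 ++ w :: q2) (q1 ++ w :: q2).
Proof.
elim: q1 a => [|b q1 IH] a /=; first by rewrite mem_head.
by rewrite in_cons IH orbT.
Qed.

Lemma mem_vert_edge (a : vert) q v : v \in q -> exists e, e \in zip (a::q) q /\ e.2 = v.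
Proof.
elim: q a => [|w q IH] a //.
rewrite in_cons => /orP [/eqP -> | H].
  by exists (a, w); rewrite /= mem_head.
have [e [He1 He2]] := IH w H.
by exists e; rewrite /= in_cons He1 orbT.
Qed.

Lemma term_gamma k t v : isTerminal k t -> (v.1 <= t.1)%N -> (v.2 <= t.2)%N ->
  inGamma k v.
Proof.
move=> /hasP [l Hl /eqP Ht] h1 h2; apply/hasP; exists l => //.
by rewrite Ht /= in h1 h2; rewrite h1 h2.
Qed.

Lemma chain_positive k E p : chain E (0,0)%N p -> isTerminal k (last (0,0)%N p) ->
  positivePath k p.
Proof.
move=> Hc Ht.
have Hp : path (gammaEdge k) (0,0)%N p.
  apply: (@chain_path k E _ _ Hc) => v Hv.
  have [h1 h2] := chain_le Hc Hv.
  exact: term_gamma Ht h1 h2.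
split => //; split => // q Hq Hl.
have := path_size Hp; have := path_size Hq; rewrite Hl /=; lia.
Qed.

Section Local.
Variable R : realFieldType.
Variables (k : seq nat) (n : nat) (lam : nat -> R) (x : point R).
Hypothesis hn : sumn k = n.
Hypothesis hn0 : (0 < n)%N.
Hypothesis hlam : forall i : nat, (1 <= i)%N -> (i < n)%N ->
     (i \in [seq nsum k l | l <- iota 0 (size k).+1] -> lam i.+1 < lam i) /\
     (i \notin [seq nsum k l | l <- iota 0 (size k).+1] -> lam i = lam i.+1).
Hypothesis hx : inGZ n lam x.

Definition Ex : edge -> Prop := fun e =>
    (exists i, (i <= n.-1)%N /\ e = ((0, i), (0, i.+1))%N) \/
    (exists i, (i <= n.-1)%N /\ e = ((i, 0), (i.+1, 0))%N) \/
    (exists i j, inI n i j /\ e = ((i.-1, j), (i, j)) /\ x i j < ext n lam x i j.+1) \/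
    (exists i j, inI n i j /\ e = ((i, j.-1), (i, j)) /\ x i j > ext n lam x i.+1 j).

Definition good (v : vert) : Prop :=
  (v.1 = 0 /\ v.2 <= n)%N \/ (v.2 = 0 /\ v.1 <= n)%N \/
  (inI n v.1 v.2 /\ (x v.1 v.2 < ext n lam x v.1 v.2.+1 \/ ext n lam x v.1.+1 v.2 < x v.1 v.2)).

Lemma ext_x i j : (i + j != n.+1)%N -> ext n lam x i j = x i j.
Proof. by move=> h; rewrite /ext (negbTE h). Qed.

Lemma ext_l i j : (i + j = n.+1)%N -> ext n lam x i j = lam i.
Proof. by move=> h; rewrite /ext h eqxx. Qed.

Lemma good_le v : good v -> (v.1 + v.2 <= n)%N.
Proof.
case=> [[-> h]|[[-> h]|[hI _]]]; first by rewrite add0n.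
  by rewrite addn0.
by move: hI; rewrite /inI => /and3P [].
Qed.

Lemma Ex_good u w : Ex (u, w) -> good u /\ good w.
Proof.
have [_ gz] := hx.
case=> [[i [hi [-> ->]]]|[[i [hi [-> ->]]]|[[i [j [hI [[-> ->] hlt]]]]|[i [j [hI [[-> ->] hlt]]]]]]].
- by split; left; split => //=; lia.
- by split; right; left; split => //=; lia.
- split; last by right; right; split => //; left.
  move: (hI); rewrite /inI => /and3P [h1 h2 h3].
  case: i h1 h3 hlt hI => [|[|i]] // _ h3 hlt hI.
    by left; split => //=; lia.
  right; right; split; first by rewrite /inI /=; lia.
  rewrite /= (ext_x (i := i.+2)); last by apply/eqP; lia.
  rewrite (ext_x (i := i.+1) (j := j.+1)); last by apply/eqP; lia.
  have [_ g] := gz i.+1 j.+1 (ltac:(rewrite /inI; apply/and3P; split; lia)).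
  have hcb : x i.+2 j < x i.+1 j.+1 by exact: lt_le_trans hlt g.
  case: (leP (x i.+1 j.+1) (x i.+1 j)) => h; last by left.
  by right; exact: lt_le_trans hcb h.
- split; last by right; right; split => //; right.
  move: (hI); rewrite /inI => /and3P [h1 h2 h3].
  case: j h2 h3 hlt hI => [|[|j]] // _ h3 hlt hI.
    by right; left; split => //=; lia.
  right; right; split; first by rewrite /inI /=; lia.
  rewrite /= (ext_x (i := i) (j := j.+2)); last by apply/eqP; lia.
  rewrite (ext_x (i := i.+1) (j := j.+1)); last by apply/eqP; lia.
  have [g _] := gz i.+1 j.+1 (ltac:(rewrite /inI; apply/and3P; split; lia)).
  have hcb : x i.+1 j.+1 < x i j.+2 by exact: le_lt_trans g hlt.
  case: (leP (x i j.+2) (x i j.+1)) => h; last by left.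
  by right; exact: lt_le_trans hcb h.
Qed.

Lemma term_nsum l : (l <= size k)%N -> isTerminal k (nsum k l, n - nsum k l)%N.
Proof.
move=> hl; apply/hasP; exists l; first by rewrite mem_iota; lia.
by rewrite hn.
Qed.

Lemma good_fwd v : good v -> isTerminal k v \/ exists w, Ex (v, w) /\ Qedge v w /\ good w.
Proof.
have [_ gz] := hx.
case: v => a b; rewrite /good /=.
case=> [[-> hb]|[[-> ha]|[hI hor]]].
- case: (ltnP b n) => h.
    right; exists (0, b.+1)%N; split; first by left; exists b; split => //; lia.
    split; first by rewrite /Qedge /= eqxx.
    by left; split => //=.
  left; have -> : b = (n - nsum k 0)%N by rewrite /nsum take0 /=; lia.
  by have := term_nsum (l := 0) (leq0n _); rewrite /nsum take0.
- case: (ltnP a n) => h.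
    right; exists (a.+1, 0)%N; split; first by right; left; exists a; split => //; lia.
    split; first by rewrite /Qedge /= eqxx orbT.
    by right; left; split => //=.
  left; have -> : a = nsum k (size k) by rewrite /nsum take_size; lia.
  have -> : 0%N = (n - nsum k (size k))%N by rewrite /nsum take_size; lia.
  exact: term_nsum.
- have [g1 g2] := gz a b hI.
  have hcb : ext n lam x a.+1 b < ext n lam x a b.+1.
    by case: hor => h; [exact: le_lt_trans g2 h | exact: lt_le_trans h g1].
  move: (hI); rewrite /inI => /and3P [h1 h2 h3].
  have [hab|hab] : (a + b = n \/ a + b < n)%N by lia.
  + rewrite (ext_l (i := a)) in hcb; last by lia.
    rewrite (ext_l (i := a.+1)) in hcb; last by lia.
    have [hin hnin] := hlam h1 (ltac:(lia)).
    left; case: (boolP (a \in [seq nsum k l | l <- iota 0 (size k).+1])) => H.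
      case/mapP: H => l Hl Ha.
      apply/hasP; exists l => //; apply/eqP; congr pair => //.
      lia.
    by rewrite (hnin H) ltxx in hcb.
  + case: (boolP (ext n lam x a.+1 b < ext n lam x a.+1 b.+1)) => H.
      right; exists (a.+1, b); split.
        right; right; left; exists a.+1, b; split.
          by rewrite /inI; apply/and3P; split; lia.
        split => //; by rewrite -(ext_x (i := a.+1) (j := b)) //; apply/eqP; lia.
      split; first by rewrite /Qedge /= eqxx orbT.
      right; right; split; first by rewrite /inI /=; lia.
      by left; rewrite /= -(ext_x (i := a.+1) (j := b)) //; apply/eqP; lia.
    rewrite -leNgt in H.
    have hx1 : ext n lam x a b.+1 = x a b.+1 by rewrite ext_x //; apply/eqP; lia.
    right; exists (a, b.+1); split.
      right; right; right; exists a, b.+1; split.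
        by rewrite /inI; apply/and3P; split; lia.
      split => //; rewrite -hx1; exact: le_lt_trans H hcb.
    split; first by rewrite /Qedge /= eqxx.
    right; right; split; first by rewrite /inI /=; lia.
    by right; rewrite /= -hx1; exact: le_lt_trans H hcb.
Qed.

Lemma Ex_Qedge u w : Ex (u, w) -> Qedge u w.
Proof.
case=> [[i [hi [-> ->]]]|[[i [hi [-> ->]]]|[[i [j [hI [[-> ->] hlt]]]]|[i [j [hI [[-> ->] hlt]]]]]]].
- by rewrite /Qedge /= eqxx.
- by rewrite /Qedge /= eqxx orbT.
- move: hI; rewrite /inI => /and3P [h1 _ _].
  by rewrite /Qedge /= prednK // eqxx orbT.
- move: hI; rewrite /inI => /and3P [_ h1 _].
  by rewrite /Qedge /= prednK // eqxx.
Qed.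

Lemma good_back v : good v -> v <> (0, 0)%N ->
  exists u, Ex (u, v) /\ good u.
Proof.
case: v => a b; rewrite /good /=.
case=> [[-> hb]|[[-> ha]|[hI hor]]] hne.
- case: b hb hne => [|b] hb hne //.
  exists (0, b)%N; split; first by left; exists b; split => //; lia.
  by left; split => //=; lia.
- case: a ha hne => [|a] ha hne //.
  exists (a, 0)%N; split; first by right; left; exists a; split => //; lia.
  by right; left; split => //=; lia.
- case: hor => h.
    have hE : Ex ((a.-1, b), (a, b)) by right; right; left; exists a, b.
    by exists (a.-1, b); split => //; have [] := Ex_good hE.
  have hE : Ex ((a, b.-1), (a, b)) by right; right; right; exists a, b.
  by exists (a, b.-1); split => //; have [] := Ex_good hE.
Qed.

Lemma back_chain m v : (v.1 + v.2 <= m)%N -> good v ->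
  exists q, chain Ex (0, 0)%N q /\ last (0, 0)%N q = v.
Proof.
elim: m v => [|m IH] v hm hv.
  exists [::]; split => //; case: v hm {hv} => [[|a] [|b]] //.
case: (eqVneq v (0, 0)%N) => [->|hne]; first by exists [::].
have [u [hE hu]] := good_back hv (fun h => negP hne (introT eqP h)).
have hQ := Ex_Qedge hE.
have := Qedge_sum hQ => hs.
have [q [hq hl]] := IH u (ltac:(lia)) hu.
exists (rcons q v); split; last by rewrite last_rcons.
rewrite -cats1; apply/chain_cat; split => //=; rewrite hl; tauto.
Qed.

Lemma fwd_chain m v : (n - (v.1 + v.2) <= m)%N -> good v ->
  exists q, chain Ex v q /\ isTerminal k (last v q).
Proof.
elim: m v => [|m IH] v hm hv;
  (case: (good_fwd hv) => [ht|[w [hE [hQ hw]]]]; first by exists [::]);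
  have := good_le hw; have := Qedge_sum hQ => hs hle.
  lia.
have [q [hq ht]] := IH w (ltac:(lia)) hw.
by exists (w :: q).
Qed.

Lemma good_paths v : good v -> exists p, chain Ex (0, 0)%N p /\
  isTerminal k (last (0, 0)%N p) /\ v \in pathVerts p.
Proof.
move=> hv.
have [q1 [h1 l1]] := back_chain (leqnn _) hv.
have [q2 [h2 t2]] := fwd_chain (leqnn _) hv.
exists (q1 ++ q2); split; first by apply/chain_cat; rewrite l1.
split; first by rewrite last_cat l1.
by rewrite /pathVerts -cat_cons mem_cat -l1 mem_last.
Qed.

Lemma edge_paths e : Ex e -> exists p, chain Ex (0, 0)%N p /\
  isTerminal k (last (0, 0)%N p) /\ e \in pathEdges p.
Proof.
case: e => u w hE.
have [hu hw] := Ex_good hE.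
have hQ := Ex_Qedge hE.
have [q1 [h1 l1]] := back_chain (leqnn _) hu.
have [q2 [h2 t2]] := fwd_chain (leqnn _) hw.
exists (q1 ++ w :: q2); split; first by apply/chain_cat; rewrite l1 /=.
split; first by rewrite last_cat l1.
by rewrite /pathEdges -l1 mem_edge_cat.
Qed.

End Local.

Theorem corollary2p4 (R : realFieldType) (k : seq nat) (n : nat) (lam : nat -> R)
  (F : point R -> Prop)
  (hk_pos : all (fun m => 0 < m)%N k) (hk_ne : (0 < size k)%N) (hn : sumn k = n)
  (hlam : forall i : nat, (1 <= i)%N -> (i < n)%N ->
     (i \in [seq nsum k l | l <- iota 0 (size k).+1] -> lam i.+1 < lam i) /\
     (i \notin [seq nsum k l | l <- iota 0 (size k).+1] -> lam i = lam i.+1))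
  (hF : isPolytopeFace n (inGZ n lam) F) :
  isGammaFace k (phi n lam F).
Proof.
have hn0 : (0 < n)%N.
  case: k hk_pos hk_ne hn {hlam} => [|m k'] //= /andP [hm _] _ <-; lia.
have [[x0 Fx0] [c hc]] := hF.
have GZ : forall x, F x -> inGZ n lam x by move=> x Fx; have [] := (hc x).1 Fx.
set G := phi n lam F.
have sub : forall x e, F x -> Ex n lam x e -> sg_E G e.
  move=> x e Fx; rewrite /G /phi /=.
  case=> [h|[h|[[i [j [hI [he hlt]]]]|[i [j [hI [he hlt]]]]]]].
  - by left.
  - by right; left.
  - by right; right; left; exists i, j; split => //; split => //; exists x.
  - by right; right; right; exists i, j; split => //; split => //; exists x.
have conv : forall e, sg_E G e -> exists x, F x /\ Ex n lam x e.
  move=> e; rewrite /G /phi /=.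
  case=> [h|[h|[[i [j [hI [he [x [Fx hlt]]]]]]|[i [j [hI [he [x [Fx hlt]]]]]]]]].
  - by exists x0; split => //; left.
  - by exists x0; split => //; right; left.
  - by exists x; split => //; right; right; left; exists i, j.
  - by exists x; split => //; right; right; right; exists i, j.
pose Paths := fun p => positivePath k p /\ forall e, e \in pathEdges p -> sg_E G e.
have pathsG : forall x v, F x -> good n lam x v -> exists p, Paths p /\ v \in pathVerts p.
  move=> x v Fx hv.
  have [p [hc' [ht hv']]] := good_paths hn hn0 hlam (GZ x Fx) hv.
  exists p; split => //; split; first exact: chain_positive hc' ht.
  move=> e he; apply: (sub x) => //; exact: (chain_edges hc' (e:=e) he).
have Vdir : forall v, sg_V G v <-> exists p, Paths p /\ v \in pathVerts p.
  move=> v; split.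
  - rewrite {1}/G /phi /= => -[e [hE hv]].
    have [x [Fx hEx]] := conv e hE.
    case: e hEx hv {hE} => u w hEx hv.
    have [hu hw] := Ex_good hn hn0 (GZ x Fx) hEx.
    by case: hv => /= ->; apply: pathsG Fx _.
  - move=> [p [[_ hpE] hv]]; rewrite /pathVerts in_cons in hv.
    case/orP: hv => [/eqP ->|hv].
      have hE : sg_E G ((0, 0), (0, 1))%N.
        by apply: (sub x0) => //; left; exists 0%N; split => //.
      by exists ((0, 0), (0, 1))%N; split; [exact: hE | left].
    have [e [he he2]] := mem_vert_edge (0, 0)%N hv.
    by exists e; split; [exact: hpE | right].
split.
  move=> v /hasP [l Hl /eqP ->]; apply/Vdir.
  rewrite mem_iota in Hl.
  have hi : (nsum k l <= sumn k)%N.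
    by rewrite /nsum -{2}(cat_take_drop l k) sumn_cat leq_addr.
  apply: (pathsG x0) => //; rewrite /good /=.
  have [h0|h0] := eqVneq (nsum k l) 0%N; first by left; split => //; lia.
  have [h1|h1] := eqVneq (nsum k l) n; first by right; left; split => //; lia.
  right; right; split; first by rewrite /inI; apply/and3P; split; lia.
  rewrite (@ext_l _ n lam x0 (nsum k l)); last by lia.
  rewrite (@ext_l _ n lam x0 (nsum k l).+1); last by lia.
  have [hin _] := hlam (nsum k l) (ltac:(lia)) (ltac:(lia)).
  have hlt := hin (ltac:(apply/mapP; exists l => //; rewrite mem_iota; lia)).
  case: (leP (lam (nsum k l)) (x0 (nsum k l) (sumn k - nsum k l)%N)) => h; last by left.
  by right; exact: lt_le_trans hlt h.
exists Paths; split; first by move=> p [].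
split; first exact: Vdir.
move=> e; split.
  move/conv => [x [Fx hE]].
  have [p [hc' [ht he]]] := edge_paths hn hn0 hlam (GZ x Fx) hE.
  exists p; split => //; split; first exact: chain_positive hc' ht.
  move=> e' he'; apply: (sub x) => //; exact: (chain_edges hc' (e:=e') he').
by move=> [p [[_ hpE] he]]; exact: hpE.
Qed.
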